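(* Fix an aggregator $f:[0,1]^2\to[0,1]$ and a two-signal structure $\theta=(\mu,\alpha_1,\beta_1,\alpha_2,\beta_2)\in\Theta_4$. Define for $\lambda\in(0,1]$ $$u(\lambda)=\Big(1+\big(\tfrac{1-\mu}{\mu}\big)^{1/\lambda}\Big)^{-1},\qquad t_\theta(\lambda)=(u(\lambda),\alpha_1,\beta_1,\alpha_2,\beta_2)\in\Theta_4,$$ and $$\phi_\theta(\lambda)=\mathbb E_{t_\theta(\lambda)}\big[L(f(\mathbf x(\mathbf s,\lambda)),\omega)-L(f^*(\mathbf s),\omega)\big],$$ where the expert reports $\mathbf x(\mathbf s,\lambda)$ and the benchmark $f^*$ are computed with respect to the structure $t_\theta(\lambda)$. Then $\phi_\theta$ is single-troughed on $(0,1]$: it is either monotone, or first monotonically non-increasing and then monotonically non-decreasing.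
   Context: Setting: binary state $\omega\in\{0,1\}$, two experts. $\Theta_4$ is the set of conditionally independent two-signal structures, written as quintuples $(\mu,\alpha_1,\beta_1,\alpha_2,\beta_2)$: signal spaces $\mathcal S_1=\mathcal S_2=\{r,b\}$, $\mu=\Pr[\omega=1]\in(0,1)$, $\alpha_i=\Pr[S_i=r\mid\omega=1]$, $\beta_i=\Pr[S_i=r\mid\omega=0]$, with $S_1,S_2$ conditionally independent given $\omega$. For a structure with prior $\mu'$ and degree $\lambda\in(0,1]$, expert $i$ with signal $s_i$ reports $x_i(s_i,\lambda)=\frac{\mu'^\lambda\Pr[S_i=s_i\mid\omega=1]}{\mu'^\lambda\Pr[S_i=s_i\mid\omega=1]+(1-\mu')^\lambda\Pr[S_i=s_i\mid\omega=0]}$, and $\mathbf x(\mathbf s,\lambda)=(x_1(s_1,\lambda),x_2(s_2,\lambda))$. $f^*(\mathbf s)=\Pr[\omega=1\mid S_1=s_1,S_2=s_2]$ under the structure in question. The loss is $L(y,\omega)=(y-\omega)^2$. *)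

(* Defs.v *)
From Stdlib Require Import Reals.
Open Scope R_scope.

(* Signals: true = r, false = b.  States: true = (omega = 1), false = (omega = 0). *)

(* Pr[S_i = s | omega = w] for expert i with parameters (alpha_i, beta_i). *)
Definition sprob (a b : R) (w s : bool) : R :=
  if w then (if s then a else 1 - a) else (if s then b else 1 - b).

Definition pprob (mu : R) (w : bool) : R := if w then mu else 1 - mu.

Definition report (mu' lam a b : R) (s : bool) : R :=
  Rpower mu' lam * sprob a b true s /
  (Rpower mu' lam * sprob a b true s + Rpower (1 - mu') lam * sprob a b false s).

(* Bayesian benchmark f*(s) = Pr[omega = 1 | S_1 = s1, S_2 = s2]
   (conditionally independent signals). *)
Definition fstar (mu a1 b1 a2 b2 : R) (s1 s2 : bool) : R :=
  mu * sprob a1 b1 true s1 * sprob a2 b2 true s2 /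
  (mu * sprob a1 b1 true s1 * sprob a2 b2 true s2
   + (1 - mu) * sprob a1 b1 false s1 * sprob a2 b2 false s2).

Definition sqloss (y : R) (w : bool) : R := (y - (if w then 1 else 0)) ^ 2.

Definition bsum (g : bool -> R) : R := g true + g false.

Definition u_map (mu lam : R) : R := / (1 + Rpower ((1 - mu) / mu) (1 / lam)).

Definition phi (f : R -> R -> R) (mu a1 b1 a2 b2 : R) (lam : R) : R :=
  let m := u_map mu lam in
  bsum (fun w => bsum (fun s1 => bsum (fun s2 =>
    pprob m w * sprob a1 b1 w s1 * sprob a2 b2 w s2 *
    (sqloss (f (report m lam a1 b1 s1) (report m lam a2 b2 s2)) w
     - sqloss (fstar m a1 b1 a2 b2 s1 s2) w)))).

Definition nonincr_on (P : R -> Prop) (g : R -> R) : Prop :=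
  forall x y, P x -> P y -> x <= y -> g y <= g x.
Definition nondecr_on (P : R -> Prop) (g : R -> R) : Prop :=
  forall x y, P x -> P y -> x <= y -> g x <= g y.

Definition single_troughed_0_1 (g : R -> R) : Prop :=
  nonincr_on (fun x => 0 < x <= 1) g \/
  nondecr_on (fun x => 0 < x <= 1) g \/
  exists c, 0 < c <= 1 /\
    nonincr_on (fun x => 0 < x <= c) g /\ nondecr_on (fun x => c <= x <= 1) g.

(* Main.v *)
Require Import Defs.
From Stdlib Require Import Reals Lra Classical.
From Coquelicot Require Import Coquelicot.
Open Scope R_scope.

Lemma troughL (phi : R -> R)
  (Q : forall x y z, 0 < x -> x < y -> y < z -> z <= 1 -> phi y <= Rmax (phi x) (phi z))
  (C : forall c, 0 < c <= 1 -> forall eps, 0 < eps -> exists d, 0 < d /\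
        forall x, 0 < x <= 1 -> Rabs (x - c) < d -> Rabs (phi x - phi c) < eps) :
  single_troughed_0_1 phi.
Proof.
  unfold single_troughed_0_1.
  destruct (classic (nonincr_on (fun x => 0 < x <= 1) phi)) as [H|H]; [left; exact H|right].
  set (T := fun q => 0 < q <= 1 /\ exists p, 0 < p < q /\ phi p < phi q).
  assert (F1 : forall q y, T q -> q <= y <= 1 -> T y).
  { intros q y [Hq [p [Hp Hpq]]] Hy. split; [lra|]. exists p. split; [lra|].
    destruct (Req_dec q y) as [E|E]; [subst; lra|].
    assert (Hm := Q p q y ltac:(lra) ltac:(lra) ltac:(lra) ltac:(lra)).
    unfold Rmax in Hm; destruct (Rle_dec (phi p) (phi y)); lra. }
  assert (F2 : forall y z, T y -> y <= z <= 1 -> phi y <= phi z).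
  { intros y z [Hy [p [Hp Hpq]]] Hz.
    destruct (Req_dec y z) as [E|E]; [subst; lra|].
    assert (Hm := Q p y z ltac:(lra) ltac:(lra) ltac:(lra) ltac:(lra)).
    unfold Rmax in Hm; destruct (Rle_dec (phi p) (phi z)); lra. }
  assert (F3 : forall x y, 0 < x -> x <= y -> y <= 1 -> ~ T y -> phi y <= phi x).
  { intros x y Hx Hxy Hy NT. destruct (Req_dec x y) as [E|E]; [subst; lra|].
    destruct (Rle_dec (phi y) (phi x)) as [r|r]; [exact r|].
    exfalso; apply NT; split; [lra|]. exists x; split; [lra|]. lra. }
  assert (Tne : exists q, T q).
  { apply NNPP; intro NE. apply H. intros x y Hx Hy Hxy.
    destruct (Rle_dec (phi y) (phi x)) as [r|r]; [exact r|].
    exfalso; apply NE; exists y; split; [lra|]. exists x; split; [|lra].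
    split; [lra|]. destruct (Req_dec x y); [subst; lra|lra]. }
  set (E := fun z => T (- z)).
  assert (Eb : bound E). { exists 0. intros z Hz. unfold E, T in Hz. lra. }
  assert (Ene : exists z, E z). { destruct Tne as [q Hq]. exists (-q). unfold E. rewrite Ropp_involutive. exact Hq. }
  destruct (completeness E Eb Ene) as [s [Hs1 Hs2]].
  set (c := - s).
  assert (Cle : forall q, T q -> c <= q).
  { intros q Hq. assert (E (-q)) by (unfold E; rewrite Ropp_involutive; exact Hq).
    specialize (Hs1 _ H0). unfold c; lra. }
  assert (Capp : forall e, 0 < e -> exists q, T q /\ q < c + e).
  { intros e He. apply NNPP; intro NE.
    assert (s <= s - e); [|lra].
    apply Hs2. intros z Hz. unfold E in Hz.
    destruct (Rle_dec z (s - e)) as [r|r]; [exact r|].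
    exfalso; apply NE. exists (-z). split; [exact Hz|]. unfold c; lra. }
  assert (c0 : 0 <= c). { destruct Tne as [q Hq]. destruct (Capp 1 ltac:(lra)) as [q' [Hq' _]].
    apply NNPP; intro Hc.
    destruct (Capp (- c) ltac:(lra)) as [q2 [Hq2 Hq2']]. unfold T in Hq2. lra. }
  assert (Tgt : forall y, c < y <= 1 -> T y).
  { intros y Hy. destruct (Capp (y - c) ltac:(lra)) as [q [Hq Hq']].
    apply (F1 q y Hq). split; lra. }
  destruct (Req_dec c 0) as [Ec|Nc].
  - left. intros x y Hx Hy Hxy. apply (F2 x y); [apply Tgt; lra|lra].
  - right. assert (c1 : c <= 1). { destruct Tne as [q Hq]. specialize (Cle q Hq). unfold T in Hq. lra. }
    assert (NTc : ~ T c).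
    { intros [Hc [p [Hp Hpc]]].
      destruct (C c ltac:(lra) (phi c - phi p) ltac:(lra)) as [d [Hd Hd']].
      set (x := Rmax p (c - d/2)).
      assert (Hx1 : p <= x) by apply Rmax_l.
      assert (Hx2 : c - d/2 <= x) by apply Rmax_r.
      assert (Hx3 : x < c). { unfold x, Rmax; destruct (Rle_dec p (c - d/2)); lra. }
      assert (Ax := Hd' x ltac:(lra) ltac:(apply Rabs_def1; lra)).
      assert (NTx : ~ T x) by (intro Tx; specialize (Cle x Tx); lra).
      assert (Fx := F3 p x ltac:(lra) Hx1 ltac:(lra) NTx).
      apply Rabs_def2 in Ax. lra. }
    exists c. split; [lra|]. split.
    + intros x y Hx Hy Hxy. apply F3; try lra.
      destruct (Req_dec y c) as [E'|E']; [subst; exact NTc|].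
      intro Ty; specialize (Cle y Ty); lra.
    + intros x y Hx Hy Hxy.
      destruct (Req_dec x c) as [Ex|Ex].
      * destruct (Req_dec y c) as [Ey|Ey]; [subst; lra|].
        destruct (Rle_dec (phi x) (phi y)) as [r|r]; [exact r|]. exfalso.
        destruct (C c ltac:(lra) (phi c - phi y) ltac:(subst; lra)) as [d [Hd Hd']].
        destruct (Capp (Rmin d (y - c)) ltac:(apply Rmin_glb_lt; lra)) as [q [Hq Hq']].
        assert (Hm1 := Rmin_l d (y - c)). assert (Hm2 := Rmin_r d (y - c)).
        assert (cq := Cle q Hq).
        assert (Aq := Hd' q ltac:(unfold T in Hq; lra) ltac:(apply Rabs_def1; lra)).
        assert (Fq := F2 q y Hq ltac:(lra)). apply Rabs_def2 in Aq. subst x. lra.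
      * apply F2; [apply Tgt; lra|lra].
Qed.

Definition conv (G : R -> R) := forall x z t, 0 < x < 1 -> 0 < z < 1 -> 0 <= t <= 1 ->
  G (t*x+(1-t)*z) <= t * G x + (1-t) * G z.

Lemma conv' G : conv G -> forall x z t m, 0 < x < 1 -> 0 < z < 1 -> 0 <= t <= 1 ->
  m = t*x+(1-t)*z -> G m <= t * G x + (1-t) * G z.
Proof. intros HG x z t m ? ? ? ->; apply HG; auto. Qed.

Lemma cs_ineq L1 L2 D1 D2 t : 0 < D1 -> 0 < D2 -> 0 <= t <= 1 ->
  (t*L1+(1-t)*L2)^2/(t*D1+(1-t)*D2) <= t*(L1^2/D1) + (1-t)*(L2^2/D2).
Proof.
  intros h1 h2 ht.
  assert (hD : 0 < t*D1+(1-t)*D2) by nra.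
  assert (E : t*(L1^2/D1) + (1-t)*(L2^2/D2) - (t*L1+(1-t)*L2)^2/(t*D1+(1-t)*D2)
     = t*(1-t)*(L1*D2-L2*D1)^2 / (D1*D2*(t*D1+(1-t)*D2))).
  { field. lra. }
  assert (0 <= t*(1-t)*(L1*D2-L2*D1)^2 / (D1*D2*(t*D1+(1-t)*D2))).
  { apply Rmult_le_pos. apply Rmult_le_pos; [nra|apply pow2_ge_0].
    left; apply Rinv_0_lt_compat. apply Rmult_lt_0_compat; [nra|lra]. }
  lra.
Qed.

Definition Hf (A B y m : R) := (y*(m*A+(1-m)*B) - m*A)^2/(m*A+(1-m)*B).

Lemma Hf_conv A B y : 0 <= A -> 0 <= B -> conv (Hf A B y).
Proof.
  intros hA hB x z t hx hz ht. unfold Hf.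
  destruct (classic (A = 0 /\ B = 0)) as [[-> ->]|N].
  - rewrite !Rmult_0_r, !Rplus_0_r. unfold Rdiv; rewrite Rinv_0, !Rmult_0_r. lra.
  - assert (pos : forall m, 0 < m < 1 -> 0 < m*A+(1-m)*B).
    { intros m hm. destruct (Req_dec A 0) as [->|nA]; [|nra].
      assert (B <> 0) by tauto. nra. }
    assert (h := cs_ineq (y*(x*A+(1-x)*B) - x*A) (y*(z*A+(1-z)*B) - z*A)
       (x*A+(1-x)*B) (z*A+(1-z)*B) t (pos x hx) (pos z hz) ht).
    replace ((t * x + (1 - t) * z) * A + (1 - (t * x + (1 - t) * z)) * B)
      with (t * (x * A + (1 - x) * B) + (1 - t) * (z * A + (1 - z) * B)) by ring.
    replace (y * (t * (x * A + (1 - x) * B) + (1 - t) * (z * A + (1 - z) * B)) -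
       (t * x + (1 - t) * z) * A) with
      (t * (y * (x * A + (1 - x) * B) - x * A) + (1 - t) * (y * (z * A + (1 - z) * B) - z * A)) by ring.
    exact h.
Qed.

Lemma conv_plus G1 G2 : conv G1 -> conv G2 -> conv (fun m => G1 m + G2 m).
Proof. intros h1 h2 x z t hx hz ht. specialize (h1 x z t hx hz ht). specialize (h2 x z t hx hz ht). lra. Qed.

Lemma conv_quasi G : conv G -> forall m1 m2 m, 0 < m1 < 1 -> 0 < m2 < 1 ->
  0 <= (m - m1) * (m2 - m) -> G m <= Rmax (G m1) (G m2).
Proof.
  intros HG m1 m2 m h1 h2 hp.
  assert (Hl := Rmax_l (G m1) (G m2)). assert (Hr := Rmax_r (G m1) (G m2)).
  destruct (Req_dec m1 m2) as [E|E].
  - subst. assert (hq : (m - m2)*(m-m2) = 0).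
    { apply Rle_antisym; [nra|apply Rle_0_sqr]. }
    apply Rmult_integral in hq. assert (m = m2) by (destruct hq; lra). subst; lra.
  - set (t := (m2 - m)/(m2 - m1)).
    assert (h0 : 0 <= (m2 - m)*(m2-m1)).
    { replace ((m2 - m)*(m2-m1)) with ((m2-m)*(m2-m) + (m-m1)*(m2-m)) by ring.
      assert (0 <= (m2-m)*(m2-m)) by apply Rle_0_sqr. lra. }
    assert (ht0 : 0 <= t).
    { unfold t. replace ((m2 - m)/(m2 - m1)) with ((m2 - m)*(m2-m1) / ((m2-m1)*(m2-m1))) by (field; lra).
      apply Rmult_le_pos; [lra|]. left; apply Rinv_0_lt_compat.
      assert (m2 - m1 <> 0) by lra. nra. }
    assert (h0' : 0 <= (m - m1)*(m2-m1)).
    { replace ((m - m1)*(m2-m1)) with ((m-m1)*(m-m1) + (m-m1)*(m2-m)) by ring.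
      assert (0 <= (m-m1)*(m-m1)) by apply Rle_0_sqr. lra. }
    assert (ht1 : 0 <= 1 - t).
    { unfold t. replace (1 - (m2 - m)/(m2 - m1)) with ((m - m1)*(m2-m1) / ((m2-m1)*(m2-m1))) by (field; lra).
      apply Rmult_le_pos; [lra|]. left; apply Rinv_0_lt_compat.
      assert (m2 - m1 <> 0) by lra. nra. }
    assert (Hm := conv' G HG m1 m2 t m h1 h2 ltac:(lra) ltac:(unfold t; field; lra)).
    assert (t * G m1 <= t * Rmax (G m1) (G m2)) by (apply Rmult_le_compat_l; lra).
    assert ((1-t) * G m2 <= (1-t) * Rmax (G m1) (G m2)) by (apply Rmult_le_compat_l; lra).
    lra.
Qed.

Lemma conv_cont G : conv G -> forall c, 0 < c < 1 -> forall eps, 0 < eps -> exists d, 0 < d /\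
  forall x, Rabs (x - c) < d -> Rabs (G x - G c) < eps.
Proof.
  intros HG c hc eps he.
  set (h := Rmin c (1 - c) / 2).
  assert (hh1 : 0 < h). { unfold h. apply Rmin_case; lra. }
  assert (hh2 : h <= c/2) by (unfold h; assert (Rmin c (1-c) <= c) by apply Rmin_l; lra).
  assert (hh3 : h <= (1-c)/2) by (unfold h; assert (Rmin c (1-c) <= 1 - c) by apply Rmin_r; lra).
  set (a := G (c - h)). set (b := G (c + h)).
  set (M := Rabs (a - G c) + Rabs (b - G c) + 1).
  assert (hM : 0 < M) by (unfold M; assert (0 <= Rabs (a - G c)) by apply Rabs_pos;
                          assert (0 <= Rabs (b - G c)) by apply Rabs_pos; lra).
  assert (Ra1 := Rle_abs (a - G c)). assert (Ra2 := Rle_abs (-(a - G c))). rewrite Rabs_Ropp in Ra2.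
  assert (Rb1 := Rle_abs (b - G c)). assert (Rb2 := Rle_abs (-(b - G c))). rewrite Rabs_Ropp in Rb2.
  assert (Pa : 0 <= Rabs (a - G c)) by apply Rabs_pos. assert (Pb : 0 <= Rabs (b - G c)) by apply Rabs_pos.
  exists (Rmin h (eps * h / M)). split.
  { apply Rmin_case; [lra|]. unfold Rdiv. apply Rmult_lt_0_compat; [nra|now apply Rinv_0_lt_compat]. }
  intros x hx. assert (m1 := Rmin_l h (eps*h/M)). assert (m2 := Rmin_r h (eps*h/M)).
  apply Rabs_def2 in hx. destruct hx as [hx1 hx2].
  set (s := Rabs (x - c) / h).
  assert (hs0 : 0 <= s) by (unfold s; apply Rmult_le_pos; [apply Rabs_pos|left; now apply Rinv_0_lt_compat]).
  assert (hsM : s * M < eps).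
  { unfold s. apply Rabs_def1 in hx1; [|lra].
    assert (H : Rabs (x - c) < eps * h / M) by lra.
    apply (Rmult_lt_compat_r (M / h)) in H; [|unfold Rdiv; apply Rmult_lt_0_compat; [lra|now apply Rinv_0_lt_compat]].
    replace (eps * h / M * (M / h)) with eps in H by (field; lra).
    replace (Rabs (x - c) / h * M) with (Rabs (x - c) * (M / h)) by (field; lra). exact H. }
  assert (hs1 : s < 1).
  { unfold s. apply Rabs_def1 in hx1; [|lra]. assert (Rabs (x - c) < h) by lra.
    apply (Rmult_lt_reg_r h); [lra|]. unfold Rdiv; rewrite Rmult_assoc, Rinv_l; lra. }
  assert (bnd : Rabs (G x - G c) <= s * M).
  { destruct (Rle_dec c x) as [cx|cx].
    - assert (es : x = c + s*h). { unfold s. rewrite Rabs_right by lra. field. lra. }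
      assert (U := conv' G HG c (c+h) (1-s) x ltac:(lra) ltac:(lra) ltac:(lra) ltac:(rewrite es; ring)).
      assert (Lw := conv' G HG x (c-h) (1/(1+s)) c ltac:(lra) ltac:(lra)
        ltac:(split; [apply Rlt_le, Rdiv_lt_0_compat; lra|apply Rmult_le_reg_r with (1+s); [lra|];
              unfold Rdiv; rewrite Rmult_1_l, Rinv_l; lra])
        ltac:(rewrite es; field; lra)).
      replace (1 - 1/(1+s)) with (s/(1+s)) in Lw by (field; lra).
      fold a in Lw. fold b in U.
      apply (Rmult_le_compat_l (1+s)) in Lw; [|lra].
      replace ((1 + s) * (1 / (1 + s) * G x + s / (1 + s) * a)) with (G x + s * a) in Lw by (field; lra).
      assert (s*(b - G c) <= s*M) by (apply Rmult_le_compat_l; unfold M; lra).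
      assert (s*(a - G c) <= s*M) by (apply Rmult_le_compat_l; unfold M; lra).
      apply Rabs_le. split; lra.
    - assert (es : x = c - s*h). { unfold s. rewrite Rabs_left by lra. field. lra. }
      assert (U := conv' G HG c (c-h) (1-s) x ltac:(lra) ltac:(lra) ltac:(lra) ltac:(rewrite es; ring)).
      assert (Lw := conv' G HG x (c+h) (1/(1+s)) c ltac:(lra) ltac:(lra)
        ltac:(split; [apply Rlt_le, Rdiv_lt_0_compat; lra|apply Rmult_le_reg_r with (1+s); [lra|];
              unfold Rdiv; rewrite Rmult_1_l, Rinv_l; lra])
        ltac:(rewrite es; field; lra)).
      replace (1 - 1/(1+s)) with (s/(1+s)) in Lw by (field; lra).
      fold a in U. fold b in Lw.
      apply (Rmult_le_compat_l (1+s)) in Lw; [|lra].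
      replace ((1 + s) * (1 / (1 + s) * G x + s / (1 + s) * b)) with (G x + s * b) in Lw by (field; lra).
      assert (s*(b - G c) <= s*M) by (apply Rmult_le_compat_l; unfold M; lra).
      assert (s*(a - G c) <= s*M) by (apply Rmult_le_compat_l; unfold M; lra).
      apply Rabs_le. split; lra. }
  lra.
Qed.

Lemma u_cont mu c : 0 < mu < 1 -> 0 < c -> forall eps, 0 < eps -> exists d, 0 < d /\
  forall x, Rabs (x - c) < d -> Rabs (u_map mu x - u_map mu c) < eps.
Proof.
  intros hmu hc eps he.
  assert (Hd : ex_derive (fun l => / (1 + exp (1/l * ln ((1-mu)/mu)))) c).
  { auto_derive. split; [lra|]. split; [|auto].
    assert (0 < exp (1 / c * ln ((1 - mu) / mu))) by apply exp_pos. lra. }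
  apply ex_derive_continuous in Hd.
  apply continuity_pt_filterlim in Hd.
  destruct (Hd eps he) as [d [hd H]].
  exists d; split; [exact hd|]. intros x hx.
  destruct (Req_dec x c) as [->|ne].
  - unfold Rminus; rewrite Rplus_opp_r, Rabs_R0; lra.
  - assert (h := H x (conj (conj I (not_eq_sym ne)) hx)). exact h.
Qed.

Definition xr mu a b s := sprob a b true s / (sprob a b true s + (1-mu)/mu * sprob a b false s).
Definition Gf (f : R -> R -> R) mu a1 b1 a2 b2 m := bsum (fun s1 => bsum (fun s2 =>
  Hf (sprob a1 b1 true s1 * sprob a2 b2 true s2) (sprob a1 b1 false s1 * sprob a2 b2 false s2)
     (f (xr mu a1 b1 s1) (xr mu a2 b2 s2)) m)).

Lemma u_range mu l : 0 < u_map mu l < 1.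
Proof.
  unfold u_map, Rpower. assert (h := exp_pos (1 / l * ln ((1 - mu) / mu))).
  set (E := exp (1 / l * ln ((1 - mu) / mu))) in *.
  split; [apply Rinv_0_lt_compat; lra|].
  apply (Rmult_lt_reg_l (1 + E)); [lra|]. rewrite Rinv_r; lra.
Qed.

Lemma rep_eq mu l a b s : 0 < mu < 1 -> 0 < l ->
  report (u_map mu l) l a b s = xr mu a b s.
Proof.
  intros hmu hl. unfold report, xr.
  set (r := (1 - mu)/mu). assert (hr : 0 < r) by (unfold r; apply Rdiv_lt_0_compat; lra).
  set (R0 := Rpower r (1/l)). assert (hR : 0 < R0) by (unfold R0, Rpower; apply exp_pos).
  assert (hm : u_map mu l = / (1 + R0)) by reflexivity. rewrite hm.
  assert (e1 : 1 - / (1 + R0) = R0 * / (1 + R0)) by (field; lra).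
  rewrite e1.
  assert (hi : 0 < / (1 + R0)) by (apply Rinv_0_lt_compat; lra).
  rewrite <- Rpower_mult_distr by lra.
  assert (e2 : Rpower R0 l = r).
  { unfold R0. rewrite Rpower_mult. replace (1 / l * l) with 1 by (field; lra). apply Rpower_1; lra. }
  rewrite e2.
  set (K := Rpower (/ (1 + R0)) l). assert (hK : 0 < K) by (unfold K, Rpower; apply exp_pos).
  set (A := sprob a b true s). set (B := sprob a b false s).
  replace (K * A + r * K * B) with (K * (A + r * B)) by ring.
  destruct (Req_dec (A + r*B) 0) as [E|E].
  - rewrite E, Rmult_0_r. unfold Rdiv; rewrite Rinv_0. ring.
  - field; split; lra.
Qed.

Lemma T2_eq m A1 A2 B1 B2 y : 0 < m < 1 -> 0 <= A1 -> 0 <= A2 -> 0 <= B1 -> 0 <= B2 ->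
  pprob m true * A1 * A2 * (sqloss y true - sqloss (m * A1 * A2 / (m * A1 * A2 + (1 - m) * B1 * B2)) true)
  + pprob m false * B1 * B2 * (sqloss y false - sqloss (m * A1 * A2 / (m * A1 * A2 + (1 - m) * B1 * B2)) false)
  = Hf (A1*A2) (B1*B2) y m.
Proof.
  intros hm h1 h2 h3 h4. unfold pprob, sqloss, Hf.
  assert (p1 : 0 <= m * A1 * A2) by (apply Rmult_le_pos; [apply Rmult_le_pos|]; lra).
  assert (p2 : 0 <= (1-m) * B1 * B2) by (apply Rmult_le_pos; [apply Rmult_le_pos|]; lra).
  replace (m * (A1 * A2) + (1 - m) * (B1 * B2)) with (m * A1 * A2 + (1 - m) * B1 * B2) by ring.
  destruct (Req_dec (m * A1 * A2 + (1 - m) * B1 * B2) 0) as [E|E].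
  - assert (z1 : m * A1 * A2 = 0) by lra. assert (z2 : (1-m) * B1 * B2 = 0) by lra.
    rewrite E. unfold Rdiv; rewrite Rinv_0.
    replace (m * A1 * A2 * (1 - m)) with 0 by (rewrite z1; ring).
    transitivity (m * A1 * A2 * ((y - 1) ^ 2 - (0 - 1) ^ 2) + (1 - m) * B1 * B2 * ((y - 0) ^ 2 - (0 - 0) ^ 2)); [ring|].
    rewrite z1, z2. ring.
  - field. exact E.
Qed.

Lemma phi_eq f mu a1 b1 a2 b2 l : 0 < mu < 1 -> 0 < l ->
  0 <= a1 <= 1 -> 0 <= b1 <= 1 -> 0 <= a2 <= 1 -> 0 <= b2 <= 1 ->
  phi f mu a1 b1 a2 b2 l = Gf f mu a1 b1 a2 b2 (u_map mu l).
Proof.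
  intros hmu hl ha1 hb1 ha2 hb2.
  assert (sp : forall a b w s, 0 <= a <= 1 -> 0 <= b <= 1 -> 0 <= sprob a b w s).
  { intros a b w s ha hb; destruct w, s; simpl; lra. }
  assert (hm := u_range mu l).
  unfold phi, Gf, bsum. cbv beta zeta.
  rewrite !(rep_eq mu l) by lra.
  set (m := u_map mu l).
  rewrite <- !T2_eq.
  all: try (apply sp; lra). all: try lra.
  all: try exact hm. unfold fstar. ring.
Qed.

Lemma u_between mu x y z : 0 < x -> x < y -> y < z ->
  0 <= (u_map mu y - u_map mu x) * (u_map mu z - u_map mu y).
Proof.
  intros hx hxy hyz. unfold u_map, Rpower.
  set (k := ln ((1 - mu) / mu)).
  set (Ex := exp (1/x * k)). set (Ey := exp (1/y * k)). set (Ez := exp (1/z * k)).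
  assert (px : 0 < Ex) by apply exp_pos. assert (py : 0 < Ey) by apply exp_pos.
  assert (pz : 0 < Ez) by apply exp_pos.
  assert (key : 0 <= (Ex - Ey) * (Ey - Ez)).
  { assert (i1 : 1/z < 1/y) by (unfold Rdiv; rewrite !Rmult_1_l; apply Rinv_lt_contravar; nra).
    assert (i2 : 1/y < 1/x) by (unfold Rdiv; rewrite !Rmult_1_l; apply Rinv_lt_contravar; nra).
    destruct (Rtotal_order k 0) as [k0|[k0|k0]].
    - assert (Ex < Ey) by (apply exp_increasing; nra).
      assert (Ey < Ez) by (apply exp_increasing; nra). nra.
    - unfold Ex, Ey, Ez; rewrite k0, !Rmult_0_r. lra.
    - assert (Ey < Ex) by (apply exp_increasing; nra).
      assert (Ez < Ey) by (apply exp_increasing; nra). nra. }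
  replace ((/ (1 + Ey) - / (1 + Ex)) * (/ (1 + Ez) - / (1 + Ey))) with
    ((Ex - Ey) * (Ey - Ez) / ((1+Ex)*(1+Ey)*((1+Ey)*(1+Ez)))) by (field; lra).
  apply Rmult_le_pos; [exact key|]. left; apply Rinv_0_lt_compat.
  apply Rmult_lt_0_compat; apply Rmult_lt_0_compat; lra.
Qed.

Lemma G_conv f mu a1 b1 a2 b2 : 0 <= a1 <= 1 -> 0 <= b1 <= 1 -> 0 <= a2 <= 1 -> 0 <= b2 <= 1 ->
  conv (Gf f mu a1 b1 a2 b2).
Proof.
  intros ha1 hb1 ha2 hb2.
  assert (sp : forall a b w s, 0 <= a <= 1 -> 0 <= b <= 1 -> 0 <= sprob a b w s).
  { intros a b w s ha hb; destruct w, s; simpl; lra. }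
  assert (HC : forall s1 s2, conv (Hf (sprob a1 b1 true s1 * sprob a2 b2 true s2) (sprob a1 b1 false s1 * sprob a2 b2 false s2)
     (f (xr mu a1 b1 s1) (xr mu a2 b2 s2)))).
  { intros s1 s2. apply Hf_conv; apply Rmult_le_pos; apply sp; lra. }
  intros x z t hx hz ht. unfold Gf, bsum.
  assert (h1 := HC true true x z t hx hz ht). assert (h2 := HC true false x z t hx hz ht).
  assert (h3 := HC false true x z t hx hz ht). assert (h4 := HC false false x z t hx hz ht).
  lra.
Qed.

Theorem mainTheorem3 (f : R -> R -> R)
  (hf : forall x y, 0 <= x <= 1 -> 0 <= y <= 1 -> 0 <= f x y <= 1)
  (mu a1 b1 a2 b2 : R)
  (hmu : 0 < mu < 1)
  (ha1 : 0 <= a1 <= 1) (hb1 : 0 <= b1 <= 1)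
  (ha2 : 0 <= a2 <= 1) (hb2 : 0 <= b2 <= 1) :
  single_troughed_0_1 (phi f mu a1 b1 a2 b2).
Proof.
  assert (GC := G_conv f mu a1 b1 a2 b2 ha1 hb1 ha2 hb2).
  apply troughL.
  - intros x y z hx hxy hyz hz.
    rewrite !(phi_eq f mu a1 b1 a2 b2) by lra.
    apply (conv_quasi _ GC); try apply u_range. apply u_between; lra.
  - intros c hc eps he.
    destruct (conv_cont _ GC (u_map mu c) (u_range mu c) eps he) as [d1 [hd1 H1]].
    destruct (u_cont mu c hmu ltac:(lra) d1 hd1) as [d2 [hd2 H2]].
    exists d2. split; [exact hd2|]. intros x hx hxc.
    rewrite !(phi_eq f mu a1 b1 a2 b2) by lra.
    apply H1, H2, hxc.
Qed.
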